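(* Let $\theta\in(0,\pi)$ and let $\mathcal{B}_\theta$ be the moduli space of spherical bigons of angle $\theta$ with labeled sides. For $i=1,2$ let $r_i$ be the radius of the disk $D_i\subset\mathbb{S}^2$ whose boundary contains side $i$, $k_i=\cot r_i$ the geodesic curvature of side $i$, $K_i=\log k_i$, $\ell_i$ the length of side $i$, and $T_i=\ell_ik_i$ its total geodesic curvature. Then the $1$-form $\omega_\theta:=\ell_1\,\mathrm{d}k_1+\ell_2\,\mathrm{d}k_2=T_1\,\mathrm{d}K_1+T_2\,\mathrm{d}K_2$ on $\mathcal{B}_\theta$ is closed.
   Context: A spherical bigon is the intersection $D_1\cap D_2$ of two open round disks in $\mathbb{S}^2$ of radii less than $\frac{\pi}{2}$, neither containing the other, with angle the interior angle at its corners; $\mathcal{B}_\theta$ consists of such bigons of angle $\theta$ with the two sides labeled $1,2$, up to label-preserving isometry. The map $(r_1,r_2)$ is a bijection $\mathcal{B}_\theta\to(0,\frac{\pi}{2})^2$, so $(k_1,k_2)$ and $(K_1,K_2)$ give smooth parametrizations of $\mathcal{B}_\theta$ by $\mathbb{R}_+^2$ and $\mathbb{R}^2$ respectively. *)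

(* Defs.v *)
From Stdlib Require Import Reals.
From Coquelicot Require Import Coquelicot.
Open Scope R_scope.

(* A spherical bigon of angle th in B_th is determined by the radii
   (r1, r2) in (0, pi/2)^2 of the disks D1, D2.  Spherical trigonometry
   in the triangle (c1, c2, p), c_i = centre of D_i, p = a corner:
   sides c1p = r1, c2p = r2, and the angle at p between the radii is
   pi - th (the interior angle of the bigon is th). *)

Definition center_dist (th r1 r2 : R) : R :=
  acos (cos r1 * cos r2 - sin r1 * sin r2 * cos th).

(* angle at the centre c_i (of the disk of radius ri) between c_i->c_j and
   c_i->p; side i is the arc of the circle of radius ri inside D_j, which
   subtends the angle 2 * center_angle at c_i. *)
Definition center_angle (th ri rj : R) : R :=
  let d := center_dist th ri rj in
  acos ((cos rj - cos ri * cos d) / (sin ri * sin d)).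

(* length of side i: arc of a circle of spherical radius ri and central
   angle 2 * alpha_i has length 2 * alpha_i * sin ri *)
Definition side_length (th ri rj : R) : R :=
  2 * center_angle th ri rj * sin ri.

Definition radius_of_curv (k : R) : R := atan (/ k).

Definition ell1 (th k1 k2 : R) : R :=
  side_length th (radius_of_curv k1) (radius_of_curv k2).
Definition ell2 (th k1 k2 : R) : R :=
  side_length th (radius_of_curv k2) (radius_of_curv k1).

(* Main.v *)
Require Import Defs.
From Stdlib Require Import Reals Lra.
From Coquelicot Require Import Coquelicot.
Open Scope R_scope.
Definition Qe (th a b : R) := (b + cos th * a)^2 + sin th ^2 * (1 + a^2).

Lemma sqrt_of_sq x y : 0 <= y -> x = y * y -> sqrt x = y.
Proof. intros H ->. replace (y*y) with (Rsqr y) by reflexivity. now apply sqrt_Rsqr. Qed.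

Lemma Qe_pos th a b : 0 < th < PI -> 0 < Qe th a b.
Proof. intros H. unfold Qe. pose proof (sin_gt_0 th (proj1 H) (proj2 H)).
  assert (0 < sin th ^2) by (simpl; nra). assert (0 < 1 + a^2) by nra.
  assert (0 < sin th ^2 * (1+a^2)) by (apply Rmult_lt_0_compat; lra). pose proof (pow2_ge_0 (b + cos th * a)). lra. Qed.

Lemma Qe_sym th a b : Qe th a b = Qe th b a.
Proof. unfold Qe. pose proof (sin2_cos2 th). unfold Rsqr in H.
  replace (sin th ^2) with (1 - cos th * cos th) by (simpl; lra). ring. Qed.

Lemma cos_r k : 0 < k -> cos (radius_of_curv k) = k / sqrt (1 + k^2).
Proof. intros Hk. unfold radius_of_curv. rewrite cos_atan.
  assert (HS: 0 < sqrt (1 + k^2)) by (apply sqrt_lt_R0; nra).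
  rewrite (sqrt_of_sq _ (sqrt (1+k^2) / k)).
  - field. split; lra.
  - apply Rlt_le, Rdiv_lt_0_compat; lra.
  - assert (sqrt (1+k^2) * sqrt (1+k^2) = 1 + k^2) by (apply sqrt_sqrt; nra).
    unfold Rsqr. replace (sqrt (1+k^2) / k * (sqrt (1+k^2) / k)) with ((sqrt (1+k^2) * sqrt (1+k^2)) / (k*k)) by (field; lra). rewrite H. field. lra.
Qed.

Lemma sin_r k : 0 < k -> sin (radius_of_curv k) = 1 / sqrt (1 + k^2).
Proof. intros Hk. unfold radius_of_curv. rewrite sin_atan.
  assert (HS: 0 < sqrt (1 + k^2)) by (apply sqrt_lt_R0; nra).
  rewrite (sqrt_of_sq _ (sqrt (1+k^2) / k)).
  - field. split; lra.
  - apply Rlt_le, Rdiv_lt_0_compat; lra.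
  - assert (sqrt (1+k^2) * sqrt (1+k^2) = 1 + k^2) by (apply sqrt_sqrt; nra).
    unfold Rsqr. replace (sqrt (1+k^2) / k * (sqrt (1+k^2) / k)) with ((sqrt (1+k^2) * sqrt (1+k^2)) / (k*k)) by (field; lra). rewrite H. field. lra.
Qed.
Lemma side_eq th ki kj : 0 < th < PI -> 0 < ki -> 0 < kj ->
  side_length th (radius_of_curv ki) (radius_of_curv kj) =
  2 * acos ((kj + cos th * ki) / sqrt (Qe th ki kj)) * (1 / sqrt (1 + ki^2)).
Proof.
  intros Hth Hi Hj.
  unfold side_length, center_angle, center_dist.
  rewrite !cos_r, !sin_r by lra.
  set (Si := sqrt (1 + ki^2)). set (Sj := sqrt (1 + kj^2)).
  assert (HSi: 0 < Si) by (apply sqrt_lt_R0; nra).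
  assert (HSj: 0 < Sj) by (apply sqrt_lt_R0; nra).
  assert (Ei: Si * Si = 1 + ki^2) by (apply sqrt_sqrt; nra).
  assert (Ej: Sj * Sj = 1 + kj^2) by (apply sqrt_sqrt; nra).
  pose proof (Qe_pos th ki kj Hth) as HQ.
  set (sQ := sqrt (Qe th ki kj)).
  assert (HsQ: 0 < sQ) by (apply sqrt_lt_R0; lra).
  assert (EQ: sQ * sQ = Qe th ki kj) by (apply sqrt_sqrt; lra).
  set (X := ki / Si * (kj / Sj) - 1 / Si * (1 / Sj) * cos th).
  assert (E1: 1 - X² = (sQ / (Si * Sj)) * (sQ / (Si * Sj))).
  { unfold Rsqr.
    replace (sQ / (Si * Sj) * (sQ / (Si * Sj))) with ((sQ*sQ) / ((Si*Si)*(Sj*Sj))) by (field; lra).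
    replace (X*X) with ((ki*kj - cos th)^2/((Si*Si)*(Sj*Sj))) by (unfold X; field; lra).
    rewrite EQ, Ei, Ej. unfold Qe.
    pose proof (sin2_cos2 th). unfold Rsqr in H.
    replace (sin th ^2) with (1 - cos th * cos th) by (simpl; lra).
    field. split; nra. }
  assert (HX: -1 <= X <= 1).
  { assert (0 <= 1 - X²) by (rewrite E1; apply Rle_0_sqr). unfold Rsqr in H. nra. }
  rewrite cos_acos, sin_acos by exact HX.
  rewrite E1. fold (Rsqr (sQ / (Si * Sj))). rewrite sqrt_Rsqr.
  2: { apply Rlt_le, Rdiv_lt_0_compat; nra. }
  f_equal. f_equal. f_equal.
  unfold X.
  replace (kj + cos th * ki) with (kj * (Si*Si) - ki * (ki * kj - cos th)) by (rewrite Ei; ring).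
  field. lra.
Qed.
Lemma g_deriv th a y : 0 < th < PI -> 0 < a ->
  is_derive (fun y => 2 * acos ((y + cos th * a) / sqrt (Qe th a y)) * (1 / sqrt (1 + a^2))) y
    (-2 * sin th / Qe th a y).
Proof.
  intros Hth Ha.
  pose proof (sin_gt_0 th (proj1 Hth) (proj2 Hth)) as Hs.
  pose proof (Qe_pos th a y Hth) as HQ.
  set (S := sqrt (1 + a^2)).
  assert (HS: 0 < S) by (apply sqrt_lt_R0; nra).
  assert (ES: S * S = 1 + a^2) by (apply sqrt_sqrt; nra).
  set (sQ := sqrt (Qe th a y)).
  assert (HsQ: 0 < sQ) by (apply sqrt_lt_R0; lra).
  assert (EQ: sQ * sQ = Qe th a y) by (apply sqrt_sqrt; lra).
  set (u := (y + cos th * a) / sQ).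
  assert (Eu: 1 - u² = (sin th * S / sQ) * (sin th * S / sQ)).
  { unfold u, Rsqr.
    replace (sin th * S / sQ * (sin th * S / sQ)) with ((sin th)^2 * (S*S) / (sQ*sQ)) by (field; lra).
    replace ((y + cos th * a) / sQ * ((y + cos th * a) / sQ)) with ((y + cos th * a)^2 / (sQ*sQ)) by (field; lra).
    rewrite ES, EQ. unfold Qe. field. fold (Qe th a y). lra. }
  assert (Hu: -1 < u < 1).
  { assert (0 < 1 - u²). { rewrite Eu. assert (0 < sin th * S / sQ). apply Rdiv_lt_0_compat; nra. nra. }
    unfold Rsqr in H. nra. }
  assert (Hacos: is_derive acos u (-1 / sqrt (1 - u²))).
  { apply is_derive_Reals. apply (derive_pt_eq_1 _ _ _ (derivable_pt_acos u Hu)).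
    apply derive_pt_acos. }
  rewrite Eu in Hacos. fold (Rsqr (sin th * S / sQ)) in Hacos. rewrite sqrt_Rsqr in Hacos.
  2: { apply Rlt_le, Rdiv_lt_0_compat; nra. }
  assert (Hin: is_derive (fun y => (y + cos th * a) / sqrt (Qe th a y)) y
             ((sin th)^2 * (1 + a^2) / (Qe th a y * sQ))).
  { assert (E0 : (y + cos th * a) * ((y + cos th * a) * 1) +
       sin th * (sin th * 1) * (1 + a * (a * 1)) = Qe th a y) by (unfold Qe; ring).
    assert (E1 : sin th ^ 2 * (1 + a ^ 2) = sQ * sQ - (y + cos th * a)^2) by (rewrite EQ; unfold Qe; ring).
    rewrite E1. rewrite <- EQ. unfold Qe. auto_derive.
    - rewrite E0. fold sQ. repeat split; lra.
    - rewrite E0. fold sQ. field. lra. }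
  pose proof (is_derive_comp acos (fun y => (y + cos th * a) / sqrt (Qe th a y)) y _ _ Hacos Hin) as Hc.
  eapply is_derive_ext.
  { intro t. symmetry. rewrite Rmult_comm, <- Rmult_assoc. reflexivity. }
  apply is_derive_scal with (k := 1 / S * 2) in Hc.
  unfold scal in Hc; simpl in Hc; unfold mult in Hc; simpl in Hc.
  replace (-2 * sin th / Qe th a y) with
    (1 / S * 2 * ((sin th)^2 * (1 + a^2) / (Qe th a y * sQ) * (-1 / (sin th * S / sQ)))).
  exact Hc.
  rewrite <- ES. field. repeat split; lra.
Qed.

Lemma loc_pos (k : R) (Hk : 0 < k) (P : R -> Prop) :
  (forall t, 0 < t -> P t) -> locally k P.
Proof.
  intros HP. exists (mkposreal k Hk). intros t Ht.
  apply HP. unfold ball in Ht; simpl in Ht.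
  unfold AbsRing_ball, abs, minus, plus, opp in Ht; simpl in Ht.
  apply Rabs_def2 in Ht. lra.
Qed.

(* omega_th = l1 dk1 + l2 dk2 is closed on B_th ~ R_+^2 (coordinates k1,k2):
   d(omega_th) = (d l2/d k1 - d l1/d k2) dk1 /\ dk2 = 0 at every point. *)
Theorem lemma3p2 (th : R) (Hth : 0 < th < PI) (k1 k2 : R)
  (Hk1 : 0 < k1) (Hk2 : 0 < k2) :
  exists a : R,
    is_derive (fun y => ell1 th k1 y) k2 a /\
    is_derive (fun x => ell2 th x k2) k1 a.
Proof.
  exists (-2 * sin th / Qe th k1 k2). split.
  - eapply is_derive_ext_loc; [| apply (g_deriv th k1 k2 Hth Hk1)].
    apply loc_pos; [exact Hk2|]. intros t Ht.
    unfold ell1. rewrite side_eq by lra. reflexivity.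
  - rewrite Qe_sym.
    eapply is_derive_ext_loc; [| apply (g_deriv th k2 k1 Hth Hk2)].
    apply loc_pos; [exact Hk1|]. intros t Ht.
    unfold ell2. rewrite side_eq by lra. reflexivity.
Qed.
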